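(* Let the bat graph be the graph obtained from an induced cycle $C_4$ on vertices $u_1,u_2,u_3,u_4$ and four vertex-disjoint copies of $K_{2,4}$ by identifying, for each $i$, one vertex of the part of size $4$ of the $i$-th copy with $u_i$. In every $B_1$-EPG representation of the bat graph, the $C_4$ on $u_1,u_2,u_3,u_4$ is represented by a square-frame.
   Context: A grid is the set of integer points of the plane; a grid edge joins two grid points at distance $1$. A path in the grid is a sequence of distinct grid edges in which consecutive edges share exactly one grid point and non-consecutive edges share none; a bend is a pair of consecutive edges with different directions (horizontal/vertical), and the bend point is their common grid point. An EPG representation of $G$ is a family $(P_v)_{v\in V(G)}$ of grid paths such that distinct $u,v$ are adjacent iff $P_u,P_v$ share a grid edge; it is $B_1$-EPG if every path has at most one bend. A one-bend path has shape $\llcorner$, $\lrcorner$, $\ulcorner$ or $\urcorner$ according to which two directions leave its bend point ($\llcorner$: up and right; $\lrcorner$: up and left; $\ulcorner$: down and right; $\urcorner$: down and left). A frame is a set of four paths $P_1,\dots,P_4$, each with its bend at a different corner of an axis-parallel rectangle, such that $P_1\cap P_2$, $P_1\cap P_3$, $P_2\cap P_4$, $P_3\cap P_4$ each contain at least one grid edge, while $P_1\cap P_4$ and $P_2\cap P_3$ contain no grid edge. A square-frame is a frame on a rectangle with corners $(x_1,y_1),(x_2,y_1),(x_1,y_2),(x_2,y_2)$, $x_1<x_2$, $y_1<y_2$, in which $P_1,P_2,P_3,P_4$ have bend points $(x_1,y_1),(x_2,y_1),(x_1,y_2),(x_2,y_2)$ and shapes $\llcorner,\lrcorner,\ulcorner,\urcorner$,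 respectively. *)

(* Defs.v *)
From Stdlib Require Import ZArith List.
Import ListNotations.
Open Scope Z_scope.

Definition point : Type := (Z * Z)%type.

(** A grid edge is represented canonically by its lower/left endpoint
    [(gx, gy)] and its orientation: if [horiz] it joins (gx,gy)-(gx+1,gy),
    otherwise it joins (gx,gy)-(gx,gy+1). *)
Record gedge := GE { gx : Z; gy : Z; horiz : bool }.

Definition src (e : gedge) : point := (gx e, gy e).
Definition tgt (e : gedge) : point :=
  if horiz e then (gx e + 1, gy e) else (gx e, gy e + 1).

Definition on_edge (p : point) (e : gedge) : Prop := p = src e \/ p = tgt e.

Definition dummy_edge : gedge := GE 0 0 true.
Definition edge_at (s : list gedge) (i : nat) : gedge := nth i s dummy_edge.

Definition is_path (s : list gedge) : Prop :=
  NoDup s /\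
  (forall i : nat, (S i < length s)%nat ->
     exists! p : point, on_edge p (edge_at s i) /\ on_edge p (edge_at s (S i))) /\
  (forall i j : nat, (S i < j)%nat -> (j < length s)%nat ->
     forall p : point, ~ (on_edge p (edge_at s i) /\ on_edge p (edge_at s j))).

Definition is_bend (s : list gedge) (i : nat) : Prop :=
  (S i < length s)%nat /\ horiz (edge_at s i) <> horiz (edge_at s (S i)).

Definition at_most_one_bend (s : list gedge) : Prop :=
  forall i j, is_bend s i -> is_bend s j -> i = j.

Inductive dir := Up | Down | Left | Right.

Definition leave (p : point) (d : dir) : gedge :=
  match d with
  | Up => GE (fst p) (snd p) false
  | Right => GE (fst p) (snd p) true
  | Down => GE (fst p) (snd p - 1) false
  | Left => GE (fst p - 1) (snd p) true
  end.

(** Shapes: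
    llcorner = (Up, Right), lrcorner = (Up, Left),
    ulcorner = (Down, Right), urcorner = (Down, Left). *)
Definition bend_with_shape (s : list gedge) (p : point) (d1 d2 : dir) : Prop :=
  exists i : nat, is_bend s i /\
    ((edge_at s i = leave p d1 /\ edge_at s (S i) = leave p d2) \/
     (edge_at s i = leave p d2 /\ edge_at s (S i) = leave p d1)).

Definition share_edge (s t : list gedge) : Prop :=
  exists e, In e s /\ In e t.

Definition square_frame (P1 P2 P3 P4 : list gedge) : Prop :=
  exists x1 x2 y1 y2 : Z, x1 < x2 /\ y1 < y2 /\
    bend_with_shape P1 (x1, y1) Up Right /\
    bend_with_shape P2 (x2, y1) Up Left /\
    bend_with_shape P3 (x1, y2) Down Right /\
    bend_with_shape P4 (x2, y2) Down Left /\
    share_edge P1 P2 /\ share_edge P1 P3 /\ share_edge P2 P4 /\ share_edge P3 P4 /\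
    ~ share_edge P1 P4 /\ ~ share_edge P2 P3.

Inductive idx4 := I1 | I2 | I3 | I4.
Inductive idx3 := J1 | J2 | J3.

Definition next4 (i : idx4) : idx4 :=
  match i with I1 => I2 | I2 => I3 | I3 => I4 | I4 => I1 end.

(** Vertices: [U i] = u_i on the C4; [A i b] = the two vertices of the part of
    size 2 of the i-th K_{2,4}; [B i k] = the three vertices of the part of
    size 4 of the i-th K_{2,4} other than u_i. *)
Inductive batV :=
| U (i : idx4)
| A (i : idx4) (b : bool)
| B (i : idx4) (k : idx3).

Definition bat_adj (v w : batV) : Prop :=
  match v, w with
  | U i, U j => next4 i = j \/ next4 j = i
  | U i, A j _ => i = j
  | A i _, U j => i = j
  | A i _, B j _ => i = j
  | B i _, A j _ => i = j
  | _, _ => False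
  end.

Definition B1_EPG_rep_bat (P : batV -> list gedge) : Prop :=
  (forall v, is_path (P v) /\ at_most_one_bend (P v)) /\
  (forall v w, v <> w -> (bat_adj v w <-> share_edge (P v) (P w))).

(* Main.v *)
Require Import Defs.
From Stdlib Require Import ZArith List Lia Setoid.
Import ListNotations.
Open Scope Z_scope.

Lemma ge_eq_tt a b c d : (GE a b true = GE c d true) <-> (a = c /\ b = d).
Proof. split; [intros H; inversion H; auto | intros [-> ->]; auto]. Qed.
Lemma ge_eq_ff a b c d : (GE a b false = GE c d false) <-> (a = c /\ b = d).
Proof. split; [intros H; inversion H; auto | intros [-> ->]; auto]. Qed.
Lemma ge_eq_tf a b c d : (GE a b true = GE c d false) <-> False.
Proof. split; [intros H; inversion H | intros []]. Qed.
Lemma ge_eq_ft a b c d : (GE a b false = GE c d true) <-> False.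
Proof. split; [intros H; inversion H | intros []]. Qed.

Lemma on_edge_t u v x y : on_edge (u,v) (GE x y true) <-> (v = y /\ (u = x \/ u = x+1)).
Proof. unfold on_edge, src, tgt; simpl; split.
 - intros [H|H]; injection H; intros; subst; auto.
 - intros [-> [->| ->]]; auto. Qed.
Lemma on_edge_f u v x y : on_edge (u,v) (GE x y false) <-> (u = x /\ (v = y \/ v = y+1)).
Proof. unfold on_edge, src, tgt; simpl; split.
 - intros [H|H]; injection H; intros; subst; auto.
 - intros [-> [->| ->]]; auto. Qed.

Definition onseg (e : gedge) (p1 p2 q1 q2 : Z) : Prop :=
  if horiz e then p2 = q2 /\ gy e = p2 /\ Z.min p1 q1 <= gx e < Z.max p1 q1
  else p1 = q1 /\ gx e = p1 /\ Z.min p2 q2 <= gy e < Z.max p2 q2.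

Ltac simpl_ge := repeat (rewrite ?ge_eq_tt, ?ge_eq_ff, ?ge_eq_tf, ?ge_eq_ft, ?on_edge_t, ?on_edge_f in *).

Definition Inv (s : list gedge) (q1 q2 : Z) : Prop :=
  exists h t p1 p2 r1 r2, s = h :: t /\ (q1 <> p1 \/ q2 <> p2) /\
   (q2 = p2 /\ r1 = p1 \/ q1 = p1 /\ r2 = p2) /\
   (forall e, In e s <-> onseg e q1 q2 p1 p2 \/ onseg e p1 p2 r1 r2) /\
   on_edge (q1,q2) h /\ (forall f, In f t -> ~ on_edge (q1,q2) f).

Ltac memb := let e := fresh "e" in intros [? ? []]; simpl; unfold onseg; simpl; simpl_ge; lia.

Lemma Inv_single x y b q1 q2 : on_edge (q1,q2) (GE x y b) -> Inv [GE x y b] q1 q2.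
Proof.
  destruct b; simpl_ge; intros [Hv Hu].
  - exists (GE x y true), [], (if Z.eq_dec q1 x then x+1 else x), y,
      (if Z.eq_dec q1 x then x+1 else x), y.
    destruct (Z.eq_dec q1 x); (split; [reflexivity|split; [lia|split;[lia|split;[memb|split]]]]);
      simpl_ge; try lia; intros ? [].
  - exists (GE x y false), [], x, (if Z.eq_dec q2 y then y+1 else y),
      x, (if Z.eq_dec q2 y then y+1 else y).
    destruct (Z.eq_dec q2 y); (split; [reflexivity|split; [lia|split;[lia|split;[memb|split]]]]);
      simpl_ge; try lia; intros ? [].
Qed.

Definition is_bend' := is_bend.

Lemma bend_exists s e1 e2 : In e1 s -> In e2 s -> horiz e1 = true -> horiz e2 = false ->
  exists i, is_bend s i.
Proof.
  revert e1 e2; induction s as [|x s IH]; intros e1 e2 H1 H2 E1 E2; [destruct H1|].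
  destruct s as [|y s'].
  - destruct H1 as [<-|[]]; destruct H2 as [<-|[]]; congruence.
  - destruct (Bool.bool_dec (horiz x) (horiz y)) as [Exy|Nxy].
    + assert (Hb : exists i, is_bend (y :: s') i).
      { destruct H1 as [<-|H1]; destruct H2 as [<-|H2].
        - congruence.
        - apply (IH y e2); simpl; auto. congruence.
        - apply (IH e1 y); simpl; auto. congruence.
        - apply (IH e1 e2); auto. }
      destruct Hb as [i [Hi1 Hi2]]. exists (S i). split; simpl in *; [lia|exact Hi2].
    + exists 0%nat. split; simpl; [lia|exact Nxy].
Qed.

Ltac elim_minmax :=
  repeat match goal with
  | |- context [Z.min ?a ?b] => first [rewrite (Z.min_l a b) by lia | rewrite (Z.min_r a b) by lia]
  | |- context [Z.max ?a ?b] => first [rewrite (Z.max_l a b) by lia | rewrite (Z.max_r a b) by lia]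
  | H : context [Z.min ?a ?b] |- _ => first [rewrite (Z.min_l a b) in H by lia | rewrite (Z.min_r a b) in H by lia]
  | H : context [Z.max ?a ?b] |- _ => first [rewrite (Z.max_l a b) in H by lia | rewrite (Z.max_r a b) in H by lia]
  end.

Ltac cbg := cbn [horiz gx gy fst snd].

Lemma in_inv_iff (A : Type) (a x : A) l : In x (a :: l) <-> a = x \/ In x l.
Proof. simpl; tauto. Qed.

Ltac memb2 x := destruct x as [? ? []]; unfold onseg in *; cbg; simpl_ge; elim_minmax; lia.

Ltac finish Hmem := split; [reflexivity|]; split; [lia|]; split; [lia|]; split;
   [ let x := fresh "x" in intros x; rewrite in_inv_iff, Hmem; memb2 x
   | split; [simpl_ge; lia|];
     let f := fresh "f" in let Hf := fresh "Hf" in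
     intros f Hf; apply Hmem in Hf; destruct f as [? ? []]; unfold onseg in Hf; cbg; cbn [horiz gx gy fst snd] in Hf; simpl_ge; elim_minmax; lia ].


Lemma Inv_step s q1 q2 e : Inv s q1 q2 -> on_edge (q1,q2) e -> ~ In e s ->
  ((exists i, is_bend s i) -> horiz e = horiz (hd dummy_edge s)) ->
  exists q1' q2', Inv (e :: s) q1' q2'.
Proof.
  intros [h [t [p1 [p2 [r1 [r2 [Hs [Hqp [Hal [Hmem [Hqh Hfree]]]]]]]]]]] Hqe Hnin Hb.
  assert (Hnseg : ~ onseg e q1 q2 p1 p2 /\ ~ onseg e p1 p2 r1 r2).
  { split; intro H; apply Hnin, Hmem; auto. }
  assert (Hh : In h s) by (rewrite Hs; left; auto).
  pose proof (proj1 (Hmem h) Hh) as Hhseg.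
  rewrite Hs in Hb; simpl in Hb.
  destruct e as [ex ey eh].
  clear Hfree Hnin.
  destruct Hal as [[E2 E1]|[E1 E2]]; [subst r1 p2|subst r2 p1]; destruct eh.
  -
    unfold onseg in Hnseg; cbn [horiz gx gy fst snd] in Hnseg; simpl_ge. clear Hb Hhseg Hqh.
    assert (Hc : (q1 = ex /\ p1 < q1) \/ (q1 = ex + 1 /\ q1 < p1)) by lia.
    destruct Hc as [[-> Hc]|[-> Hc]].
    + exists (ex+1), ey, (GE ex ey true), s, p1, q2, p1, r2. finish Hmem.
    + exists ex, ey, (GE ex ey true), s, p1, q2, p1, r2. finish Hmem.
  -
    assert (Er : r2 = q2).
    { destruct (Z.eq_dec r2 q2) as [|Hne]; [auto|exfalso].
      assert (Hbd : exists i, is_bend s i).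
      { apply (bend_exists s (GE (Z.min q1 p1) q2 true) (GE p1 (Z.min q2 r2) false)); auto;
        apply Hmem; unfold onseg; simpl; lia. }
      rewrite Hs in Hbd. specialize (Hb Hbd).
      destruct h as [hx hy []]; simpl in Hb; [discriminate|].
      unfold onseg in Hhseg; cbn [horiz gx gy fst snd] in Hhseg; simpl_ge; lia. }
    subst r2. clear Hb Hhseg Hqh Hnseg. simpl_ge.
    destruct Hqe as [-> [-> | ->]].
    + exists ex, (ey+1), (GE ex ey false), s, ex, ey, p1, ey. finish Hmem.
    + exists ex, ey, (GE ex ey false), s, ex, (ey+1), p1, (ey+1). finish Hmem.
  -
    assert (Er : r1 = q1).
    { destruct (Z.eq_dec r1 q1) as [|Hne]; [auto|exfalso].
      assert (Hbd : exists i, is_bend s i).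
      { apply (bend_exists s (GE (Z.min q1 r1) p2 true) (GE q1 (Z.min q2 p2) false)); auto;
        apply Hmem; unfold onseg; simpl; lia. }
      rewrite Hs in Hbd. specialize (Hb Hbd).
      destruct h as [hx hy []]; simpl in Hb; [|discriminate].
      unfold onseg in Hhseg; cbn [horiz gx gy fst snd] in Hhseg; simpl_ge; lia. }
    subst r1. clear Hb Hhseg Hqh Hnseg. simpl_ge.
    destruct Hqe as [-> [-> | ->]].
    + exists (ex+1), ey, (GE ex ey true), s, ex, ey, ex, p2. finish Hmem.
    + exists ex, ey, (GE ex ey true), s, (ex+1), ey, (ex+1), p2. finish Hmem.
  - unfold onseg in Hnseg; cbn [horiz gx gy fst snd] in Hnseg; simpl_ge. clear Hb Hhseg Hqh.
    assert (Hc : (q2 = ey /\ p2 < q2) \/ (q2 = ey + 1 /\ q2 < p2)) by lia.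
    destruct Hc as [[-> Hc]|[-> Hc]].
    + exists ex, (ey+1), (GE ex ey false), s, q1, p2, r1, p2. finish Hmem.
    + exists ex, ey, (GE ex ey false), s, q1, p2, r1, p2. finish Hmem.
Qed.

Lemma three_pts a b c h : on_edge a h -> on_edge b h -> on_edge c h -> a = b \/ a = c \/ b = c.
Proof. unfold on_edge; intros [->| ->] [->| ->] [->| ->]; auto. Qed.

Lemma path_tail e s : is_path (e :: s) -> is_path s.
Proof.
  intros [Hnd [Hc Hn]]. split; [|split].
  - inversion Hnd; auto.
  - intros i Hi. apply (Hc (S i)). simpl; lia.
  - intros i j Hij Hj. apply (Hn (S i) (S j)); simpl; lia.
Qed.

Lemma amob_tail e s : at_most_one_bend (e :: s) -> at_most_one_bend s.
Proof.
  intros H i j [Hi1 Hi2] [Hj1 Hj2].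
  assert (S i = S j); [|lia].
  apply H; split; simpl; auto; lia.
Qed.

Lemma Inv_exists s : is_path s -> at_most_one_bend s -> s <> [] -> exists q1 q2, Inv s q1 q2.
Proof.
  induction s as [|e s0 IH]; intros Hp Ha Hne; [congruence|].
  destruct s0 as [|h t].
  - destruct e as [x y b]. exists x, y. apply Inv_single. left; reflexivity.
  - assert (Hnin : ~ In e (h :: t)) by (destruct Hp as [Hnd _]; inversion Hnd; auto).
    assert (Hz : exists z, on_edge z e /\ on_edge z h).
    { destruct Hp as [_ [Hc _]]. destruct (Hc 0%nat) as [z [Hz _]]; [simpl; lia|]. exists z; exact Hz. }
    assert (Hb : (exists i, is_bend (h :: t) i) -> horiz e = horiz (hd dummy_edge (h :: t))).
    { intros [i [Hi1 Hi2]]. simpl.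
      destruct (Bool.bool_dec (horiz e) (horiz h)) as [|Hne']; [auto|exfalso].
      assert (0%nat = S i); [|lia].
      apply Ha; split; simpl in *; auto; lia. }
    destruct Hz as [[z1 z2] [Hze Hzh]].
    destruct t as [|f t'].
    + apply (Inv_step [h] z1 z2 e); auto. destruct h; apply Inv_single; auto.
    + destruct (IH (path_tail _ _ Hp) (amob_tail _ _ Ha) ltac:(congruence)) as [q1 [q2 HI]].
      apply (Inv_step _ q1 q2 e); auto.
      assert (HI' := HI).
      destruct HI' as [h' [t'' [p1 [p2 [r1 [r2 [Hs [_ [_ [_ [Hqh Hfree]]]]]]]]]]].
      injection Hs as <- <-.
      destruct (Z.eq_dec z1 q1); [destruct (Z.eq_dec z2 q2); [subst; auto|]|];
      exfalso;
      (destruct Hp as [_ [Hc Hn]];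
       destruct (Hc 1%nat) as [w [[Hwh Hwf] _]]; [simpl; lia|]; simpl in Hwh, Hwf;
       assert (Hwq : w <> (q1,q2)) by (intro; subst w; apply (Hfree f); simpl; auto);
       destruct (three_pts _ _ _ _ Hqh Hzh Hwh) as [E|[E|E]];
       [ injection E; intros; subst; congruence
       | congruence
       | subst w; apply (Hn 0%nat 2%nat ltac:(lia) ltac:(simpl; lia) (z1,z2)); simpl; auto ]).
Qed.

Definition rep (s : list gedge) (X Y a b c d : Z) : Prop :=
  a <= b /\ c <= d /\ (a = X \/ b = X) /\ (c = Y \/ d = Y) /\
  forall e, In e s <-> (if horiz e then gy e = Y /\ a <= gx e < b else gx e = X /\ c <= gy e < d).

Lemma rep_exists s : is_path s -> at_most_one_bend s -> exists X Y a b c d, rep s X Y a b c d.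
Proof.
  intros Hp Ha. destruct s as [|e0 s0].
  - exists 0, 0, 0, 0, 0, 0. split; [lia|]; split; [lia|]; split; [lia|]; split; [lia|].
    intros [? ? []]; simpl; split; try (intros []); lia.
  - destruct (Inv_exists (e0 :: s0) Hp Ha ltac:(congruence)) as [q1 [q2 HI]].
    destruct HI as [h [t [p1 [p2 [r1 [r2 [Hs [Hqp [Hal [Hmem _]]]]]]]]]].
    destruct Hal as [[E2 E1]|[E1 E2]].
    + exists p1, p2, (Z.min q1 p1), (Z.max q1 p1), (Z.min p2 r2), (Z.max p2 r2).
      split; [lia|]; split; [lia|]; split; [lia|]; split; [lia|].
      intros x. rewrite Hmem. destruct x as [? ? []]; unfold onseg; cbg; lia.
    + exists p1, p2, (Z.min p1 r1), (Z.max p1 r1), (Z.min q2 p2), (Z.max q2 p2).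
      split; [lia|]; split; [lia|]; split; [lia|]; split; [lia|].
      intros x. rewrite Hmem. destruct x as [? ? []]; unfold onseg; cbg; lia.
Qed.
Record prm := Prm { pX : Z; pY : Z; pa : Z; pb : Z; pc : Z; pd : Z }.
Definition wf P := pa P <= pb P /\ pc P <= pd P /\ (pa P = pX P \/ pb P = pX P) /\ (pc P = pY P \/ pd P = pY P).
Definition shH P Q := pY P = pY Q /\ pa P < pb Q /\ pa Q < pb P /\ pa P < pb P /\ pa Q < pb Q.
Definition shV P Q := pX P = pX Q /\ pc P < pd Q /\ pc Q < pd P /\ pc P < pd P /\ pc Q < pd Q.
Definition sh P Q := shH P Q \/ shV P Q.

Definition HH A1 A2 V := shH V A1 /\ shH V A2.
Definition VV A1 A2 V := shV V A1 /\ shV V A2.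
Definition HV A1 A2 V := shH V A1 /\ shV V A2.

Lemma nshH P Q : ~ sh P Q -> pY P = pY Q -> pa P < pb P -> pa Q < pb Q -> pb P <= pa Q \/ pb Q <= pa P.
Proof. unfold sh, shH; intros; lia. Qed.
Lemma nshV P Q : ~ sh P Q -> pX P = pX Q -> pc P < pd P -> pc Q < pd Q -> pd P <= pc Q \/ pd Q <= pc P.
Proof. unfold sh, shV; intros; lia. Qed.

Lemma HH_HH A1 A2 V W : ~ sh A1 A2 -> HH A1 A2 V -> HH A1 A2 W -> sh V W.
Proof. unfold HH; intros N [H1 H2] [H3 H4]. left. unfold shH in *.
  assert (pb A1 <= pa A2 \/ pb A2 <= pa A1) by (apply nshH; auto; lia). lia. Qed.
Lemma VV_VV A1 A2 V W : ~ sh A1 A2 -> VV A1 A2 V -> VV A1 A2 W -> sh V W.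
Proof. unfold VV; intros N [H1 H2] [H3 H4]. right. unfold shV in *.
  assert (pd A1 <= pc A2 \/ pd A2 <= pc A1) by (apply nshV; auto; lia). lia. Qed.
Lemma HH_HV A1 A2 V W : wf A2 -> wf W -> ~ sh A1 A2 -> HH A1 A2 V -> HV A1 A2 W -> sh V W.
Proof. unfold HH, HV, wf; intros [_ [_ [E2 _]]] [_ [_ [EW _]]] N [H1 H2] [H3 H4]. left. unfold shH, shV in *.
  assert (pb A1 <= pa A2 \/ pb A2 <= pa A1) by (apply nshH; auto; lia). lia. Qed.
Lemma VV_HV A1 A2 V W : wf A1 -> wf W -> ~ sh A1 A2 -> VV A1 A2 V -> HV A1 A2 W -> sh V W.
Proof. unfold VV, HV, wf; intros [_ [_ [_ E1]]] [_ [_ [_ EW]]] N [H1 H2] [H3 H4]. right. unfold shH, shV in *.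
  assert (pd A1 <= pc A2 \/ pd A2 <= pc A1) by (apply nshV; auto; lia). lia. Qed.
Lemma HV_HV A1 A2 V W : wf V -> wf W -> HV A1 A2 V -> HV A1 A2 W -> ~ sh V W ->
  (pa V = pX V /\ pb W = pX W \/ pb V = pX V /\ pa W = pX W) /\
  (pc V = pY V /\ pd W = pY W \/ pd V = pY V /\ pc W = pY W).
Proof. unfold HV, wf; intros [_ [_ [EV FV]]] [_ [_ [EW FW]]] [H1 H2] [H3 H4] N. unfold shH, shV in *.
  assert (pb V <= pa W \/ pb W <= pa V) by (apply nshH; auto; lia).
  assert (pd V <= pc W \/ pd W <= pc V) by (apply nshV; auto; lia). lia. Qed.

Definition cover A B V := pY A = pY V /\ pa A <= pX V - 1 /\ pX V + 1 <= pb A /\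
  pX B = pX V /\ pc B <= pY V - 1 /\ pY V + 1 <= pd B.

Lemma sh_sym P Q : sh P Q -> sh Q P.
Proof. unfold sh, shH, shV; lia. Qed.
Lemma nsh_sym P Q : ~ sh P Q -> ~ sh Q P.
Proof. intros H H'; apply H, sh_sym, H'. Qed.

Lemma HV_cover A1 A2 V W : wf V -> wf W -> HV A1 A2 V -> HV A1 A2 W -> ~ sh V W -> cover A1 A2 V.
Proof. intros wV wW H1 H2 N. pose proof (HV_HV A1 A2 V W wV wW H1 H2 N) as D.
  unfold HV, cover, shH, shV in *. lia. Qed.

Lemma HV_three A1 A2 U V W : wf U -> wf V -> wf W -> HV A1 A2 U -> HV A1 A2 V -> HV A1 A2 W ->
  ~ sh U V -> ~ sh U W -> ~ sh V W -> False.
Proof. intros wU wV wW HU HV' HW N1 N2 N3.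
  pose proof (HV_HV A1 A2 U V wU wV HU HV' N1).
  pose proof (HV_HV A1 A2 U W wU wW HU HW N2).
  pose proof (HV_HV A1 A2 V W wV wW HV' HW N3).
  unfold HV, shH, shV in *. lia. Qed.

Inductive typ := tHH | tVV | tHV | tVH.
Definition typed A1 A2 t V : Prop :=
  match t with tHH => HH A1 A2 V | tVV => VV A1 A2 V | tHV => HV A1 A2 V | tVH => HV A2 A1 V end.
Definition okp t t' : bool :=
  match t, t' with
  | tHH, tVV | tVV, tHH | tHV, tHV | tHV, tVH | tVH, tHV | tVH, tVH => true
  | _, _ => false end.

Lemma classify A1 A2 V : sh V A1 -> sh V A2 -> exists t, typed A1 A2 t V.
Proof. unfold sh; intros [H1|H1] [H2|H2].
  - exists tHH; split; auto.
  - exists tHV; split; auto.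
  - exists tVH; split; auto.
  - exists tVV; split; auto. Qed.

Lemma HH_swap A1 A2 V : HH A1 A2 V -> HH A2 A1 V.
Proof. unfold HH; tauto. Qed.
Lemma VV_swap A1 A2 V : VV A1 A2 V -> VV A2 A1 V.
Proof. unfold VV; tauto. Qed.

Lemma okp_true A1 A2 t t' V W : wf A1 -> wf A2 -> wf V -> wf W -> ~ sh A1 A2 ->
  typed A1 A2 t V -> typed A1 A2 t' W -> ~ sh V W -> okp t t' = true.
Proof.
  intros w1 w2 wV wW N HV' HW NVW. pose proof (nsh_sym _ _ N) as N'.
  destruct t, t'; simpl in *; auto; exfalso; apply NVW.
  - exact (HH_HH A1 A2 V W N HV' HW).
  - exact (HH_HV A1 A2 V W w2 wW N HV' HW).
  - exact (HH_HV A2 A1 V W w1 wW N' (HH_swap _ _ _ HV') HW).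
  - exact (VV_VV A1 A2 V W N HV' HW).
  - exact (VV_HV A1 A2 V W w1 wW N HV' HW).
  - exact (VV_HV A2 A1 V W w2 wW N' (VV_swap _ _ _ HV') HW).
  - exact (sh_sym _ _ (HH_HV A1 A2 W V w2 wV N HW HV')).
  - exact (sh_sym _ _ (VV_HV A1 A2 W V w1 wV N HW HV')).
  - exact (sh_sym _ _ (HH_HV A2 A1 W V w1 wV N' (HH_swap _ _ _ HW) HV')).
  - exact (sh_sym _ _ (VV_HV A2 A1 W V w2 wV N' (VV_swap _ _ _ HW) HV')).
Qed.

Lemma K24p A1 A2 V1 V2 V3 V4 : wf A1 -> wf A2 -> wf V1 -> wf V2 -> wf V3 -> wf V4 ->
  ~ sh A1 A2 -> sh V1 A1 -> sh V1 A2 -> sh V2 A1 -> sh V2 A2 -> sh V3 A1 -> sh V3 A2 ->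
  sh V4 A1 -> sh V4 A2 ->
  ~ sh V1 V2 -> ~ sh V1 V3 -> ~ sh V1 V4 -> ~ sh V2 V3 -> ~ sh V2 V4 -> ~ sh V3 V4 ->
  pa V1 < pb V1 /\ pc V1 < pd V1 /\ (cover A1 A2 V1 \/ cover A2 A1 V1).
Proof.
  intros w1 w2 u1 u2 u3 u4 N a1 b1 a2 b2 a3 b3 a4 b4 n12 n13 n14 n23 n24 n34.
  destruct (classify A1 A2 V1 a1 b1) as [t1 T1].
  destruct (classify A1 A2 V2 a2 b2) as [t2 T2].
  destruct (classify A1 A2 V3 a3 b3) as [t3 T3].
  destruct (classify A1 A2 V4 a4 b4) as [t4 T4].
  pose proof (okp_true A1 A2 _ _ _ _ w1 w2 u1 u2 N T1 T2 n12).
  pose proof (okp_true A1 A2 _ _ _ _ w1 w2 u1 u3 N T1 T3 n13).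
  pose proof (okp_true A1 A2 _ _ _ _ w1 w2 u1 u4 N T1 T4 n14).
  pose proof (okp_true A1 A2 _ _ _ _ w1 w2 u2 u3 N T2 T3 n23).
  pose proof (okp_true A1 A2 _ _ _ _ w1 w2 u2 u4 N T2 T4 n24).
  pose proof (okp_true A1 A2 _ _ _ _ w1 w2 u3 u4 N T3 T4 n34).
  assert (Hb : pa V1 < pb V1 /\ pc V1 < pd V1).
  { destruct t1; simpl in T1; unfold HH, VV, HV, shH, shV in T1; try lia;
    destruct t2, t3, t4; simpl in *; discriminate. }
  split; [tauto|]. split; [tauto|].
  destruct t1, t2, t3, t4; simpl in *; try discriminate;
  first [ left; apply (HV_cover A1 A2 V1 V2); assumption
        | left; apply (HV_cover A1 A2 V1 V3); assumption
        | left; apply (HV_cover A1 A2 V1 V4); assumption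
        | right; apply (HV_cover A2 A1 V1 V2); assumption
        | right; apply (HV_cover A2 A1 V1 V3); assumption
        | right; apply (HV_cover A2 A1 V1 V4); assumption
        | exfalso; apply (HV_three A2 A1 V2 V3 V4); assumption
        | exfalso; apply (HV_three A1 A2 V2 V3 V4); assumption ].
Qed.

Definition bent P := pa P < pb P /\ pc P < pd P.
Definition avoid Q P :=
  (pY Q = pY P -> ~ (pa Q <= pX P < pb Q) /\ ~ (pa Q <= pX P - 1 < pb Q)) /\
  (pX Q = pX P -> ~ (pc Q <= pY P < pd Q) /\ ~ (pc Q <= pY P - 1 < pd Q)).

Lemma C1H P Q : wf P -> wf Q -> bent P -> bent Q -> avoid P Q -> avoid Q P -> shH P Q ->
  (pX P < pX Q /\ pa P = pX P /\ pb Q = pX Q) \/ (pX Q < pX P /\ pb P = pX P /\ pa Q = pX Q).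
Proof. unfold wf, bent, avoid, shH.
  intros [_ [_ [EP _]]] [_ [_ [EQ _]]] [bP _] [bQ _] [aPQ _] [aQP _] [Hy H].
  specialize (aPQ ltac:(lia)). specialize (aQP ltac:(lia)). destruct EP, EQ; lia. Qed.
Lemma C1V P Q : wf P -> wf Q -> bent P -> bent Q -> avoid P Q -> avoid Q P -> shV P Q ->
  (pY P < pY Q /\ pc P = pY P /\ pd Q = pY Q) \/ (pY Q < pY P /\ pd P = pY P /\ pc Q = pY Q).
Proof. unfold wf, bent, avoid, shV.
  intros [_ [_ [_ EP]]] [_ [_ [_ EQ]]] [_ bP] [_ bQ] [_ aPQ] [_ aQP] [Hx H].
  specialize (aPQ ltac:(lia)). specialize (aQP ltac:(lia)). destruct EP, EQ; lia. Qed.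

Lemma C2H P Q R : wf P -> wf Q -> wf R -> bent P -> bent Q -> bent R ->
  avoid P Q -> avoid Q P -> avoid P R -> avoid R P -> shH P Q -> shH P R -> ~ sh Q R -> False.
Proof. intros wP wQ wR bP bQ bR a1 a2 a3 a4 h1 h2 N.
  pose proof (C1H P Q wP wQ bP bQ a1 a2 h1) as D1.
  pose proof (C1H P R wP wR bP bR a3 a4 h2) as D2.
  assert (NQR : pb Q <= pa R \/ pb R <= pa Q).
  { apply nshH; auto; unfold shH, bent in *; lia. }
  destruct a1 as [a1 _]. destruct a3 as [a3 _].
  unfold shH, bent in *.
  specialize (a1 ltac:(lia)). specialize (a3 ltac:(lia)).
  clear a2 a4 N wP wQ wR. destruct D1 as [D1|D1], D2 as [D2|D2]; lia. Qed.
Lemma C2V P Q R : wf P -> wf Q -> wf R -> bent P -> bent Q -> bent R ->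
  avoid P Q -> avoid Q P -> avoid P R -> avoid R P -> shV P Q -> shV P R -> ~ sh Q R -> False.
Proof. intros wP wQ wR bP bQ bR a1 a2 a3 a4 h1 h2 N.
  pose proof (C1V P Q wP wQ bP bQ a1 a2 h1) as D1.
  pose proof (C1V P R wP wR bP bR a3 a4 h2) as D2.
  assert (NQR : pd Q <= pc R \/ pd R <= pc Q).
  { apply nshV; auto; unfold shV, bent in *; lia. }
  destruct a1 as [_ a1]. destruct a3 as [_ a3].
  unfold shV, bent in *.
  specialize (a1 ltac:(lia)). specialize (a3 ltac:(lia)).
  clear a2 a4 N wP wQ wR. destruct D1 as [D1|D1], D2 as [D2|D2]; lia. Qed.

Lemma shH_sym P Q : shH P Q -> shH Q P. Proof. unfold shH; lia. Qed.
Lemma shV_sym P Q : shV P Q -> shV Q P. Proof. unfold shV; lia. Qed.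

Lemma C4p P1 P2 P3 P4 : wf P1 -> wf P2 -> wf P3 -> wf P4 ->
  bent P1 -> bent P2 -> bent P3 -> bent P4 ->
  avoid P1 P2 -> avoid P2 P1 -> avoid P2 P3 -> avoid P3 P2 ->
  avoid P3 P4 -> avoid P4 P3 -> avoid P4 P1 -> avoid P1 P4 ->
  sh P1 P2 -> sh P2 P3 -> sh P3 P4 -> sh P4 P1 -> ~ sh P1 P3 -> ~ sh P2 P4 ->
  (shH P1 P2 /\ shV P2 P3 /\ shH P3 P4 /\ shV P4 P1) \/
  (shV P1 P2 /\ shH P2 P3 /\ shV P3 P4 /\ shH P4 P1).
Proof.
  intros w1 w2 w3 w4 b1 b2 b3 b4 a12 a21 a23 a32 a34 a43 a41 a14 s12 s23 s34 s41 n13 n24.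
  pose proof (nsh_sym _ _ n13) as n31. pose proof (nsh_sym _ _ n24) as n42.
  destruct s12 as [s12|s12], s23 as [s23|s23], s34 as [s34|s34], s41 as [s41|s41];
  try (left; tauto); try (right; tauto); exfalso;
  first
  [ exact (C2H P1 P2 P4 w1 w2 w4 b1 b2 b4 a12 a21 a14 a41 s12 (shH_sym _ _ s41) n24)
  | exact (C2V P1 P2 P4 w1 w2 w4 b1 b2 b4 a12 a21 a14 a41 s12 (shV_sym _ _ s41) n24)
  | exact (C2H P2 P1 P3 w2 w1 w3 b2 b1 b3 a21 a12 a23 a32 (shH_sym _ _ s12) s23 n13)
  | exact (C2V P2 P1 P3 w2 w1 w3 b2 b1 b3 a21 a12 a23 a32 (shV_sym _ _ s12) s23 n13)
  | exact (C2H P3 P2 P4 w3 w2 w4 b3 b2 b4 a32 a23 a34 a43 (shH_sym _ _ s23) s34 n24)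
  | exact (C2V P3 P2 P4 w3 w2 w4 b3 b2 b4 a32 a23 a34 a43 (shV_sym _ _ s23) s34 n24)
  | exact (C2H P4 P3 P1 w4 w3 w1 b4 b3 b1 a43 a34 a41 a14 (shH_sym _ _ s34) s41 n31)
  | exact (C2V P4 P3 P1 w4 w3 w1 b4 b3 b1 a43 a34 a41 a14 (shV_sym _ _ s34) s41 n31) ].
Qed.

Definition repP s P := rep s (pX P) (pY P) (pa P) (pb P) (pc P) (pd P).

Lemma rep_wf s P : repP s P -> wf P.
Proof. intros [H1 [H2 [H3 [H4 _]]]]; unfold wf; auto. Qed.

Lemma repP_exists s : is_path s -> at_most_one_bend s -> exists P, repP s P.
Proof. intros Hp Ha. destruct (rep_exists s Hp Ha) as [X [Y [a [b [c [d H]]]]]].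
  exists (Prm X Y a b c d); exact H. Qed.

Lemma rep_mem s P e : repP s P -> (In e s <-> (if horiz e then gy e = pY P /\ pa P <= gx e < pb P else gx e = pX P /\ pc P <= gy e < pd P)).
Proof. intros [_ [_ [_ [_ M]]]]; apply M. Qed.

Lemma rep_share s1 s2 P1 P2 : repP s1 P1 -> repP s2 P2 -> (share_edge s1 s2 <-> sh P1 P2).
Proof.
  intros R1 R2. unfold share_edge, sh, shH, shV. split.
  - intros [e [H1 H2]]. rewrite (rep_mem _ _ _ R1) in H1; rewrite (rep_mem _ _ _ R2) in H2.
    destruct e as [x y []]; simpl in *; lia.
  - intros [H|H].
    + exists (GE (Z.max (pa P1) (pa P2)) (pY P1) true).
      rewrite (rep_mem _ _ _ R1), (rep_mem _ _ _ R2); simpl; lia.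
    + exists (GE (pX P1) (Z.max (pc P1) (pc P2)) false).
      rewrite (rep_mem _ _ _ R1), (rep_mem _ _ _ R2); simpl; lia.
Qed.

Lemma share_sym s t : share_edge s t -> share_edge t s.
Proof. intros [e [H1 H2]]; exists e; auto. Qed.

Lemma bend_shape s P x y dv dh : is_path s -> repP s P -> bent P -> x = pX P -> y = pY P ->
  (dv = Up /\ pc P = pY P \/ dv = Down /\ pd P = pY P) ->
  (dh = Right /\ pa P = pX P \/ dh = Left /\ pb P = pX P) ->
  bend_with_shape s (x, y) dv dh.
Proof.
  intros Hp R [B1 B2] -> -> Hdv Hdh.
  destruct (bend_exists s (GE (pa P) (pY P) true) (GE (pX P) (pc P) false)) as [i Hi];
    [apply (rep_mem _ _ _ R); simpl; lia | apply (rep_mem _ _ _ R); simpl; lia | reflexivity | reflexivity |].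
  exists i. split; [exact Hi|].
  destruct Hi as [Hi1 Hi2].
  destruct Hp as [_ [Hc _]]. destruct (Hc i Hi1) as [[z1 z2] [[Hz1 Hz2] _]].
  assert (M1 : In (edge_at s i) s) by (apply nth_In; lia).
  assert (M2 : In (edge_at s (S i)) s) by (apply nth_In; lia).
  rewrite (rep_mem _ _ _ R) in M1. rewrite (rep_mem _ _ _ R) in M2.
  destruct (edge_at s i) as [x1 y1 h1], (edge_at s (S i)) as [x2 y2 h2].
  simpl in *.
  destruct h1, h2; try congruence; simpl_ge;
  destruct Hdv as [[-> ?]|[-> ?]], Hdh as [[-> ?]|[-> ?]]; simpl; simpl_ge; lia.
Qed.

Lemma sf_intro Q1 Q2 Q3 Q4 R1 R2 R3 R4 :
  is_path Q1 -> is_path Q2 -> is_path Q3 -> is_path Q4 ->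
  repP Q1 R1 -> repP Q2 R2 -> repP Q3 R3 -> repP Q4 R4 ->
  bent R1 -> bent R2 -> bent R3 -> bent R4 ->
  pX R1 < pX R2 -> pY R1 < pY R3 -> pX R3 = pX R1 -> pX R4 = pX R2 -> pY R2 = pY R1 -> pY R4 = pY R3 ->
  pc R1 = pY R1 -> pa R1 = pX R1 -> pc R2 = pY R2 -> pb R2 = pX R2 ->
  pd R3 = pY R3 -> pa R3 = pX R3 -> pd R4 = pY R4 -> pb R4 = pX R4 ->
  share_edge Q1 Q2 -> share_edge Q1 Q3 -> share_edge Q2 Q4 -> share_edge Q3 Q4 ->
  ~ share_edge Q1 Q4 -> ~ share_edge Q2 Q3 -> square_frame Q1 Q2 Q3 Q4.
Proof.
  intros p1 p2 p3 p4 r1 r2 r3 r4 b1 b2 b3 b4 x12 y13 x31 x42 y21 y43 e1 e2 e3 e4 e5 e6 e7 e8 s12 s13 s24 s34 n14 n23.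
  exists (pX R1), (pX R2), (pY R1), (pY R3).
  split; [lia|]. split; [lia|].
  split; [apply (bend_shape Q1 R1); auto|].
  split; [apply (bend_shape Q2 R2); auto|].
  split; [apply (bend_shape Q3 R3); auto|].
  split; [apply (bend_shape Q4 R4); auto; lia|].
  tauto.
Qed.

Lemma share_of_shH s t P Q : repP s P -> repP t Q -> shH P Q -> share_edge s t.
Proof. intros R1 R2 H. apply (proj2 (rep_share s t P Q R1 R2)). left; exact H. Qed.
Lemma share_of_shV s t P Q : repP s P -> repP t Q -> shV P Q -> share_edge s t.
Proof. intros R1 R2 H. apply (proj2 (rep_share s t P Q R1 R2)). right; exact H. Qed.

Lemma frame4 W1 W2 W3 W4 P1 P2 P3 P4 :
  is_path W1 -> is_path W2 -> is_path W3 -> is_path W4 ->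
  repP W1 P1 -> repP W2 P2 -> repP W3 P3 -> repP W4 P4 ->
  bent P1 -> bent P2 -> bent P3 -> bent P4 ->
  avoid P1 P2 -> avoid P2 P1 -> avoid P2 P3 -> avoid P3 P2 ->
  avoid P3 P4 -> avoid P4 P3 -> avoid P4 P1 -> avoid P1 P4 ->
  shH P1 P2 -> shV P2 P3 -> shH P3 P4 -> shV P4 P1 ->
  ~ share_edge W1 W3 -> ~ share_edge W2 W4 ->
  square_frame W1 W2 W4 W3 \/ square_frame W2 W1 W3 W4 \/
  square_frame W4 W3 W1 W2 \/ square_frame W3 W4 W2 W1.
Proof.
  intros p1 p2 p3 p4 r1 r2 r3 r4 b1 b2 b3 b4 a12 a21 a23 a32 a34 a43 a41 a14 h12 v23 h34 v41 n13 n24.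
  pose proof (rep_wf _ _ r1) as w1. pose proof (rep_wf _ _ r2) as w2.
  pose proof (rep_wf _ _ r3) as w3. pose proof (rep_wf _ _ r4) as w4.
  pose proof (C1H P1 P2 w1 w2 b1 b2 a12 a21 h12) as D12.
  pose proof (C1V P2 P3 w2 w3 b2 b3 a23 a32 v23) as D23.
  pose proof (C1H P3 P4 w3 w4 b3 b4 a34 a43 h34) as D34.
  pose proof (C1V P4 P1 w4 w1 b4 b1 a41 a14 v41) as D41.
  pose proof (share_of_shH _ _ _ _ r1 r2 h12) as s12.
  pose proof (share_of_shV _ _ _ _ r2 r3 v23) as s23.
  pose proof (share_of_shH _ _ _ _ r3 r4 h34) as s34.
  pose proof (share_of_shV _ _ _ _ r4 r1 v41) as s41.
  pose proof (share_sym _ _ s12) as s21. pose proof (share_sym _ _ s23) as s32.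
  pose proof (share_sym _ _ s34) as s43. pose proof (share_sym _ _ s41) as s14.
  assert (n31 : ~ share_edge W3 W1) by (intro H; apply n13, share_sym, H).
  assert (n42 : ~ share_edge W4 W2) by (intro H; apply n24, share_sym, H).
  assert (E : pY P1 = pY P2 /\ pX P2 = pX P3 /\ pY P3 = pY P4 /\ pX P4 = pX P1).
  { unfold shH, shV in *; lia. }
  destruct E as [E12 [E23 [E34 E41]]].
  clear a12 a21 a23 a32 a34 a43 a41 a14 h12 v23 h34 v41.
  destruct D12 as [D12|D12], D23 as [D23|D23], D34 as [D34|D34], D41 as [D41|D41];
  try (exfalso; lia).
  - left. apply (sf_intro W1 W2 W4 W3 P1 P2 P4 P3); auto; lia.
  - right; right; left. apply (sf_intro W4 W3 W1 W2 P4 P3 P1 P2); auto; lia.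
  - right; left. apply (sf_intro W2 W1 W3 W4 P2 P1 P3 P4); auto; lia.
  - right; right; right. apply (sf_intro W3 W4 W2 W1 P3 P4 P2 P1); auto; lia.
Qed.


Lemma adjS (P : batV -> list gedge) (HP : B1_EPG_rep_bat P) v w : v <> w -> bat_adj v w -> share_edge (P v) (P w).
Proof. intros Hne Ha. apply (proj2 HP v w Hne), Ha. Qed.
Lemma nadjS (P : batV -> list gedge) (HP : B1_EPG_rep_bat P) v w : v <> w -> ~ bat_adj v w -> ~ share_edge (P v) (P w).
Proof. intros Hne Ha Hs. apply Ha, (proj2 HP v w Hne), Hs. Qed.

Lemma repV (P : batV -> list gedge) (HP : B1_EPG_rep_bat P) v : exists Q, repP (P v) Q.
Proof. destruct (proj1 HP v) as [Hp Ha]. apply repP_exists; auto. Qed.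

Lemma pathV (P : batV -> list gedge) (HP : B1_EPG_rep_bat P) v : is_path (P v).
Proof. apply (proj1 HP v). Qed.

Definition around (Q : prm) (E : gedge) : Prop :=
  E = GE (pX Q) (pY Q) true \/ E = GE (pX Q - 1) (pY Q) true \/
  E = GE (pX Q) (pY Q) false \/ E = GE (pX Q) (pY Q - 1) false.

Lemma gadget (P : batV -> list gedge) (HP : B1_EPG_rep_bat P) i : exists Q, repP (P (U i)) Q /\ bent Q /\
  forall j, j <> i -> forall E, around Q E -> ~ In E (P (U j)).
Proof.
  destruct (repV P HP (U i)) as [Qu Ru].
  destruct (repV P HP (A i false)) as [Q0 R0].
  destruct (repV P HP (A i true)) as [Q1 R1].
  destruct (repV P HP (B i J1)) as [QB1 RB1].
  destruct (repV P HP (B i J2)) as [QB2 RB2].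
  destruct (repV P HP (B i J3)) as [QB3 RB3].
  assert (S : forall v w Qv Qw, repP (P v) Qv -> repP (P w) Qw -> v <> w -> bat_adj v w -> sh Qv Qw).
  { intros v w Qv Qw Rv Rw Hne Ha. apply (proj1 (rep_share _ _ _ _ Rv Rw)). apply (adjS P HP); auto. }
  assert (N : forall v w Qv Qw, repP (P v) Qv -> repP (P w) Qw -> v <> w -> ~ bat_adj v w -> ~ sh Qv Qw).
  { intros v w Qv Qw Rv Rw Hne Ha Hs. apply (nadjS P HP v w Hne Ha). apply (proj2 (rep_share _ _ _ _ Rv Rw)); auto. }
  destruct (K24p Q0 Q1 Qu QB1 QB2 QB3 (rep_wf _ _ R0) (rep_wf _ _ R1) (rep_wf _ _ Ru)
    (rep_wf _ _ RB1) (rep_wf _ _ RB2) (rep_wf _ _ RB3)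
    (N _ _ _ _ R0 R1 ltac:(congruence) ltac:(simpl; auto))
    (S _ _ _ _ Ru R0 ltac:(congruence) ltac:(simpl; auto))
    (S _ _ _ _ Ru R1 ltac:(congruence) ltac:(simpl; auto))
    (S _ _ _ _ RB1 R0 ltac:(congruence) ltac:(simpl; auto))
    (S _ _ _ _ RB1 R1 ltac:(congruence) ltac:(simpl; auto))
    (S _ _ _ _ RB2 R0 ltac:(congruence) ltac:(simpl; auto))
    (S _ _ _ _ RB2 R1 ltac:(congruence) ltac:(simpl; auto))
    (S _ _ _ _ RB3 R0 ltac:(congruence) ltac:(simpl; auto))
    (S _ _ _ _ RB3 R1 ltac:(congruence) ltac:(simpl; auto))
    (N _ _ _ _ Ru RB1 ltac:(congruence) ltac:(simpl; auto))
    (N _ _ _ _ Ru RB2 ltac:(congruence) ltac:(simpl; auto))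
    (N _ _ _ _ Ru RB3 ltac:(congruence) ltac:(simpl; auto))
    (N _ _ _ _ RB1 RB2 ltac:(congruence) ltac:(simpl; auto))
    (N _ _ _ _ RB1 RB3 ltac:(congruence) ltac:(simpl; auto))
    (N _ _ _ _ RB2 RB3 ltac:(congruence) ltac:(simpl; auto)))
    as [Hb1 [Hb2 Hcov]].
  exists Qu. split; [exact Ru|]. split; [split; assumption|].
  intros j Hj E HE Hin.
  assert (HA : In E (P (A i false)) \/ In E (P (A i true))).
  { rewrite (rep_mem _ _ _ R0), (rep_mem _ _ _ R1).
    unfold cover in Hcov.
    destruct HE as [-> | [-> | [-> | ->]]]; simpl; lia. }
  destruct HA as [HA|HA].
  - apply (nadjS P HP (U j) (A i false) ltac:(congruence) ltac:(simpl; congruence)).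
    exists E; auto.
  - apply (nadjS P HP (U j) (A i true) ltac:(congruence) ltac:(simpl; congruence)).
    exists E; auto.
Qed.

Lemma avoid_of s Q Q' : repP s Q -> (forall E, around Q' E -> ~ In E s) -> avoid Q Q'.
Proof.
  intros R H. unfold avoid. split; intros Heq; split; intro Hc.
  - apply (H (GE (pX Q') (pY Q') true)); [unfold around; auto|]. apply (rep_mem _ _ _ R); simpl; lia.
  - apply (H (GE (pX Q' - 1) (pY Q') true)); [unfold around; auto|]. apply (rep_mem _ _ _ R); simpl; lia.
  - apply (H (GE (pX Q') (pY Q') false)); [unfold around; auto|]. apply (rep_mem _ _ _ R); simpl; lia.
  - apply (H (GE (pX Q') (pY Q' - 1) false)); [unfold around; auto|]. apply (rep_mem _ _ _ R); simpl; lia.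
Qed.


Theorem corollary2p2 (P : batV -> list gedge) :
  B1_EPG_rep_bat P ->
  exists a b c d : idx4,
    a <> b /\ a <> c /\ a <> d /\ b <> c /\ b <> d /\ c <> d /\
    square_frame (P (U a)) (P (U b)) (P (U c)) (P (U d)).
Proof.
  intros HP.
  destruct (gadget P HP I1) as [Q1 [R1 [b1 G1]]].
  destruct (gadget P HP I2) as [Q2 [R2 [b2 G2]]].
  destruct (gadget P HP I3) as [Q3 [R3 [b3 G3]]].
  destruct (gadget P HP I4) as [Q4 [R4 [b4 G4]]].
  assert (av : forall i j Qi Qj, repP (P (U i)) Qi -> (forall k, k <> j -> forall E, around Qj E -> ~ In E (P (U k))) -> i <> j -> avoid Qi Qj).
  { intros i j Qi Qj Ri Gj Hij. apply (avoid_of _ Qi Qj Ri). intros E HE. apply Gj; auto. }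
  assert (S : forall v w Qv Qw, repP (P v) Qv -> repP (P w) Qw -> v <> w -> bat_adj v w -> sh Qv Qw).
  { intros v w Qv Qw Rv Rw Hne Ha. apply (proj1 (rep_share _ _ _ _ Rv Rw)). apply (adjS P HP); auto. }
  assert (N : forall v w, v <> w -> ~ bat_adj v w -> ~ share_edge (P v) (P w)).
  { intros v w Hne Ha. apply (nadjS P HP); auto. }
  assert (Nq : forall v w Qv Qw, repP (P v) Qv -> repP (P w) Qw -> v <> w -> ~ bat_adj v w -> ~ sh Qv Qw).
  { intros v w Qv Qw Rv Rw Hne Ha Hs. apply (N v w Hne Ha). apply (proj2 (rep_share _ _ _ _ Rv Rw)); auto. }
  pose proof (pathV P HP (U I1)) as p1. pose proof (pathV P HP (U I2)) as p2.
  pose proof (pathV P HP (U I3)) as p3. pose proof (pathV P HP (U I4)) as p4.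
  assert (n13 : ~ share_edge (P (U I1)) (P (U I3))) by (apply N; [congruence|simpl; intuition discriminate]).
  assert (n24 : ~ share_edge (P (U I2)) (P (U I4))) by (apply N; [congruence|simpl; intuition discriminate]).
  assert (n13' : ~ sh Q1 Q3) by (apply (Nq _ _ _ _ R1 R3); [congruence|simpl; intuition discriminate]).
  assert (n24' : ~ sh Q2 Q4) by (apply (Nq _ _ _ _ R2 R4); [congruence|simpl; intuition discriminate]).
  pose proof (av _ _ _ _ R1 G2 ltac:(congruence)) as a12.
  pose proof (av _ _ _ _ R2 G1 ltac:(congruence)) as a21.
  pose proof (av _ _ _ _ R2 G3 ltac:(congruence)) as a23.
  pose proof (av _ _ _ _ R3 G2 ltac:(congruence)) as a32.
  pose proof (av _ _ _ _ R3 G4 ltac:(congruence)) as a34.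
  pose proof (av _ _ _ _ R4 G3 ltac:(congruence)) as a43.
  pose proof (av _ _ _ _ R4 G1 ltac:(congruence)) as a41.
  pose proof (av _ _ _ _ R1 G4 ltac:(congruence)) as a14.
  destruct (C4p Q1 Q2 Q3 Q4 (rep_wf _ _ R1) (rep_wf _ _ R2) (rep_wf _ _ R3) (rep_wf _ _ R4)
    b1 b2 b3 b4 a12 a21 a23 a32 a34 a43 a41 a14
    (S _ _ _ _ R1 R2 ltac:(congruence) ltac:(simpl; auto))
    (S _ _ _ _ R2 R3 ltac:(congruence) ltac:(simpl; auto))
    (S _ _ _ _ R3 R4 ltac:(congruence) ltac:(simpl; auto))
    (S _ _ _ _ R4 R1 ltac:(congruence) ltac:(simpl; auto))
    n13' n24') as [[h12 [v23 [h34 v41]]]|[v12 [h23 [v34 h41]]]].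
  - destruct (frame4 _ _ _ _ Q1 Q2 Q3 Q4 p1 p2 p3 p4 R1 R2 R3 R4 b1 b2 b3 b4
      a12 a21 a23 a32 a34 a43 a41 a14 h12 v23 h34 v41 n13 n24) as [F|[F|[F|F]]].
    + exists I1, I2, I4, I3; repeat split; try congruence; exact F.
    + exists I2, I1, I3, I4; repeat split; try congruence; exact F.
    + exists I4, I3, I1, I2; repeat split; try congruence; exact F.
    + exists I3, I4, I2, I1; repeat split; try congruence; exact F.
  - assert (n42 : ~ share_edge (P (U I4)) (P (U I2))) by (intro H; apply n24, share_sym, H).
    destruct (frame4 _ _ _ _ Q2 Q3 Q4 Q1 p2 p3 p4 p1 R2 R3 R4 R1 b2 b3 b4 b1
      a23 a32 a34 a43 a41 a14 a12 a21 h23 v34 h41 v12 n24 ltac:(intro H; apply n13, share_sym, H)) as [F|[F|[F|F]]].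
    + exists I2, I3, I1, I4; repeat split; try congruence; exact F.
    + exists I3, I2, I4, I1; repeat split; try congruence; exact F.
    + exists I1, I4, I2, I3; repeat split; try congruence; exact F.
    + exists I4, I1, I3, I2; repeat split; try congruence; exact F.
Qed.
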